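(* Let $(G,\vec\nu)$ be a signature game on a finite game graph $G$ with vertex set $V$ and maximal absolute integer weight $W$, such that every integer threshold $\nu_i\in\mathbb{Z}$ satisfies $\nu_i\geq -2\cdot W\cdot|V|$. Then player 1 has a winning strategy in $(G,\vec\nu)$ if and only if player 1 has a memoryless (positional) winning strategy in $(G,\vec\nu)$.
   Context: A finite two-player game graph $G=((V,E),(V_1,V_2))$ has a finite directed graph $(V,E)$ whose vertices are partitioned into player-1 vertices $V_1$ and player-2 vertices $V_2$, an initial vertex $v_0$, and a weight function $w:E\to\mathbb{Z}\cup\{-\omega\}$; $W$ is the maximum absolute value of the integer weights. Plays are infinite paths from $v_0$, the owner of the current vertex choosing the next edge. The weight of a finite path is the sum of its edge weights, with the convention $-\omega+z=-\omega$ for $z\in\mathbb{Z}\cup\{-\omega\}$. A signature game $(G,\vec\nu)$ has a threshold vector $\vec\nu=(\nu_1,\dots,\nu_{|V|})$ with $\nu_i\in\mathbb{Z}\cup\{+\infty,-\omega\}$, where $\nu_i$ is associated to vertex $v_i$. Player 1 wins a play $\rho=\rho_0\rho_1\dots$ iff (a) $\rho$ contains no cycle of negative weight and no cycle containing an edge of weight $-\omega$, and (b) for every $j$, if $\rho_j=v_i$ then $w(\rho_0\dots\rho_j)\geq\nu_i$, under the order $-\omega<z<+\infty$ for all $z\in\mathbb{Z}$ (so vertices with threshold $+\infty$ must never be visited). A memoryless strategy chooses the next edge depending only on the current vertex; a winning strategy ensures player 1 wins every consistent play. *)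

(* Defs.v *)
From mathcomp Require Import all_boot all_order all_algebra.
Set Implicit Arguments. Unset Strict Implicit. Unset Printing Implicit Defensive.
Import Order.TTheory GRing.Theory Num.Theory.

Inductive weight := WInt of int | WNegOmega.

Inductive thr := TInt of int | TPInf | TNegOmega.

Definition wadd (a b : weight) : weight :=
  match a, b with
  | WInt x, WInt y => WInt (x + y)%R
  | _, _ => WNegOmega
  end.

Definition wge (a : weight) (t : thr) : Prop :=
  match t with
  | TPInf => False
  | TNegOmega => True
  | TInt z => match a with WInt x => (z <= x)%R | WNegOmega => False end
  end.

Section Game.
Variables (V : finType) (E : rel V) (owner1 : pred V) (v0 : V)
          (w : V -> V -> weight) (nu : V -> thr).

Definition wabs (a : weight) : nat := if a is WInt z then `|z|%N else 0%N.
Definition maxW : nat := (\max_(p : V * V | E p.1 p.2) wabs (w p.1 p.2))%N.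

Definition is_play (rho : nat -> V) : Prop :=
  rho 0%N = v0 /\ forall i, E (rho i) (rho i.+1).

Definition seg_weight (rho : nat -> V) (i j : nat) : weight :=
  foldr (fun k acc => wadd (w (rho k) (rho k.+1)) acc) (WInt 0) (iota i (j - i)).

(* general (history-dependent) strategies of player 1: given the history
   rho_0 ... rho_{j-1} and the current vertex rho_j, choose the next vertex *)
Definition strategy1 := seq V -> V -> V.

Definition is_strategy1 (s : strategy1) : Prop :=
  forall h v, owner1 v -> E v (s h v).

Definition consistent (s : strategy1) (rho : nat -> V) : Prop :=
  forall j, owner1 (rho j) -> rho j.+1 = s [seq rho k | k <- iota 0 j] (rho j).

Definition win1 (rho : nat -> V) : Prop :=
  (* (a) no cycle of negative weight, no cycle containing a -omega edge *)
  (forall i j, (i < j)%N -> rho i = rho j ->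
     exists z, seg_weight rho i j = WInt z /\ (0 <= z)%R) /\
  (forall j, wge (seg_weight rho 0 j) (nu (rho j))).

Definition winning1 (s : strategy1) : Prop :=
  forall rho, is_play rho -> consistent s rho -> win1 rho.

Definition memoryless_winning : Prop :=
  exists f : V -> V, (forall v, owner1 v -> E v (f v)) /\
                     winning1 (fun _ v => f v).

Definition has_winning_strategy : Prop :=
  exists s : strategy1, is_strategy1 s /\ winning1 s.

End Game.

(* Main.v *)
Require Import Defs.
From mathcomp Require Import all_boot all_order all_algebra zify.
From Stdlib Require Import Classical ClassicalEpsilon.
Set Implicit Arguments. Unset Strict Implicit. Unset Printing Implicit Defensive.
Import Order.TTheory GRing.Theory Num.Theory.
Local Open Scope ring_scope.

Section Proof.
Variables (V : finType) (E : rel V) (owner1 : pred V) (v0 : V)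
          (w : V -> V -> weight) (nu : V -> thr).

Definition Wn : nat := maxW E w.
Definition Nn : nat := #|V|.
Definition Mc : int := ((3 * Wn * Nn + Wn).+1)%N%:Z.
Definition Kc : int := (Nn%:Z * Mc).

Definition iw (a : weight) : int := match a with WInt z => z | WNegOmega => - Mc end.

Fixpoint enc (rho : nat -> V) (i n : nat) : int :=
  match n with 0 => 0 | n'.+1 => iw (w (rho i) (rho i.+1)) + enc rho i.+1 n' end.

Fixpoint segn (rho : nat -> V) (i n : nat) : weight :=
  match n with 0 => WInt 0 | n'.+1 => wadd (w (rho i) (rho i.+1)) (segn rho i.+1 n') end.

Lemma seg_weightE rho i j : seg_weight w rho i j = segn rho i (j - i)%N.
Proof.
rewrite /seg_weight; move: (j - i)%N => n; elim: n i => [|n IH] i //=.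
by rewrite IH.
Qed.

Definition isom (rho : nat -> V) k := w (rho k) (rho k.+1) = WNegOmega.

Lemma segn_spec rho i n :
  (segn rho i n = WNegOmega /\ exists k, (i <= k < i + n)%N /\ isom rho k) \/
  (segn rho i n = WInt (enc rho i n) /\ forall k, (i <= k < i + n)%N -> ~ isom rho k).
Proof.
elim: n i => [|n IH] i /=.
  right; split => // k; lia.
rewrite /isom; case Hw: (w (rho i) (rho i.+1)) => [z|].
  case: (IH i.+1) => [[-> [k [Hk Hom]]]|[-> Hno]].
    left; split => //; exists k; split => //; lia.
  right; split => // k Hk Hom.
  have [ek|ne] := eqVneq k i; first by subst k; rewrite Hw in Hom.
  apply: (Hno k) => //; lia.
left; split => //; exists i; split => //; lia.
Qed.

Lemma enc_split rho i k m : enc rho i (k + m) = enc rho i k + enc rho (i + k) m.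
Proof.
elim: k i => [|k IH] i /=; first by rewrite add0r addn0.
by rewrite IH addrA addnS.
Qed.

Lemma enc_ext rho1 rho2 i1 i2 n :
  (forall t, (t <= n)%N -> rho1 (i1 + t)%N = rho2 (i2 + t)%N) ->
  enc rho1 i1 n = enc rho2 i2 n.
Proof.
elim: n i1 i2 => [|n IH] i1 i2 H //=.
have h0 := H 0%N isT; have h1 := H 1%N isT; rewrite !addn0 !addn1 in h0 h1.
rewrite h0 h1; congr (_ + _); apply: IH => t Ht.
rewrite !addSnnS; exact: H.
Qed.

Lemma iw_le a b : E a b -> iw (w a b) <= Wn%:Z.
Proof.
move=> Hab; rewrite /iw /Wn /maxW.
have := @leq_bigmax_cond _ (fun p : V * V => E p.1 p.2) (fun p => wabs (w p.1 p.2)) (a, b) Hab.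
case: (w a b) => [z|] /= H.
  apply: le_trans (lez_abs z) _; by rewrite lez_nat. idtac.
rewrite /Mc /Wn /maxW; move: (\max_(p | E p.1 p.2) wabs (w p.1 p.2))%N => m; lia.
Qed.

Lemma iw_ge a b : E a b -> - Mc <= iw (w a b).
Proof.
move=> Hab; rewrite /iw /Mc.
have := @leq_bigmax_cond _ (fun p : V * V => E p.1 p.2) (fun p => wabs (w p.1 p.2)) (a, b) Hab.
case: (w a b) => [z|] /= H //.
have Hz : (- z <= (`|z|%N)%:Z)%R by rewrite -abszN lez_abs.
rewrite /Wn /maxW in Hz *. 
have : ((`|z|%N)%:Z <= (\max_(p | E p.1 p.2) wabs (w p.1 p.2))%N%:Z)%R by rewrite lez_nat.
move: (\max_(p | E p.1 p.2) wabs (w p.1 p.2))%N => m; rewrite /Nn. move: #|V| => nn. lia.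
Qed.

Definition edges (rho : nat -> V) := forall k, E (rho k) (rho k.+1).

Lemma enc_le rho i n : edges rho -> enc rho i n <= n%:Z * Wn%:Z.
Proof.
move=> He; elim: n i => [|n IH] i /=; first by rewrite mul0r.
have := iw_le (He i); have := IH i.+1; lia.
Qed.

Lemma enc_om_le rho i n k : edges rho -> (i <= k < i + n)%N -> isom rho k ->
  enc rho i n <= n%:Z * Wn%:Z - Mc.
Proof.
move=> He; elim: n i => [|n IH] i Hk Hom /=; first lia.
have [ek|ne] := eqVneq k i.
  subst k; rewrite /isom in Hom; rewrite Hom /=.
  have := enc_le i.+1 n He; lia.
have := iw_le (He i); have := IH i.+1 ltac:(lia) Hom; lia.
Qed.

Lemma distinct_le (rho : nat -> V) i n :
  (forall t1 t2, (t1 < t2 < n)%N -> rho (i + t1)%N <> rho (i + t2)%N) -> (n <= #|V|)%N.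
Proof.
move=> Hd.
have Hu : uniq [seq rho (i + t)%N | t <- iota 0 n].
  rewrite map_inj_in_uniq ?iota_uniq // => t1 t2; rewrite !mem_iota /= !add0n => H1 H2 Heq.
  apply/eqP; case: (ltngtP t1 t2) => // H; exfalso.
    by apply: (Hd t1 t2) => //; lia.
  by apply: (Hd t2 t1) => //; lia.
have := card_uniqP Hu; rewrite size_map size_iota => <-.
exact: max_card.
Qed.

Definition pplay (f : V -> V) (rho : nat -> V) :=
  is_play E v0 rho /\ forall j, owner1 (rho j) -> rho j.+1 = f (rho j).

Lemma pplay_edges f rho : pplay f rho -> edges rho.
Proof. by case=> [[_ H] _]. Qed.

Definition remloop (rho : nat -> V) (a b : nat) : nat -> V :=
  fun t => if (t <= a)%N then rho t else rho (t + (b - a))%N.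

Lemma remloop_play f rho a b : pplay f rho -> (a < b)%N -> rho a = rho b ->
  pplay f (remloop rho a b).
Proof.
move=> [[H0 He] Hc] Hab Heq; rewrite /remloop; split; [split|].
- by rewrite leq0n.
- move=> k; case: (ltngtP k a) => Hk.
  + exact: He.
  + rewrite addSn; exact: He.
  + subst k; rewrite addSn subnKC ?(ltnW Hab) // Heq; exact: He.
- move=> k; case: (ltngtP k a) => Hk.
  + exact: Hc.
  + rewrite addSn; exact: Hc.
  + subst k; rewrite addSn subnKC ?(ltnW Hab) // Heq; exact: Hc.
Qed.

Definition pump (rho : nat -> V) (i L : nat) : nat -> V :=
  fun k => if (k < i)%N then rho k else rho (i + (k - i) %% L)%N.

Lemma modS_cases n L : (0 < L)%N ->
  (n.+1 %% L = if (n %% L).+1 == L then 0 else (n %% L).+1)%N.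
Proof.
move=> HL; have : (n.+1 %% L = (n %% L).+1 %% L)%N.
  by rewrite -addn1 -modnDml addn1.
move=> ->; have := ltn_pmod n HL.
case: eqP => [->|ne] H; first by rewrite modnn.
rewrite modn_small //; lia.
Qed.

Lemma pump_play f rho i L : pplay f rho -> (0 < L)%N -> rho i = rho (i + L)%N ->
  pplay f (pump rho i L).
Proof.
move=> [[H0 He] Hc] HL Heq.
have key : forall k, (i <= k)%N ->
   (pump rho i L k = rho (i + (k - i) %% L)%N /\
    pump rho i L k.+1 = rho (i + (k - i) %% L).+1)%N.
  move=> k Hk; rewrite /pump ltnNge Hk /= ltnNge (leqW Hk) /=; split => //.
  rewrite subSn // modS_cases //; have := ltn_pmod (k - i) HL.
  case: eqP => [e|ne] H; last by rewrite addnS.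
  by rewrite addn0 Heq -addnS e.
split; [split|].
- rewrite /pump; case: ifP => Hi; first exact: H0.
  have ei : i = 0%N by lia.
  rewrite ei sub0n mod0n addn0; exact: H0.
- move=> k; case: (ltnP k i) => Hk.
  + rewrite /pump Hk; case: ltnP => Hk1; first exact: He.
    have ei : i = k.+1 by lia.
    subst i; rewrite subnn mod0n addn0; exact: He.
  + by case: (key k Hk) => -> ->.
- move=> k; case: (ltnP k i) => Hk.
  + rewrite /pump Hk; case: ltnP => Hk1; first exact: Hc.
    have ei : i = k.+1 by lia.
    subst i; rewrite subnn mod0n addn0; exact: Hc.
  + by case: (key k Hk) => -> ->; apply: Hc.
Qed.

Definition thrOK (t : thr) (c : int) : Prop :=
  match t with TInt z => z <= c | TPInf => False | TNegOmega => True end.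
Definition okc v c := - Kc <= c /\ thrOK (nu v) c.
Definition EGwin f := forall rho, pplay f rho -> forall j, okc (rho j) (enc rho 0 j).

Lemma pump_enc rho i L : (0 < L)%N -> rho i = rho (i + L)%N -> forall m,
  enc (pump rho i L) 0 (i + m * L) = enc rho 0 i + m%:Z * enc rho i L.
Proof.
move=> HL Heq; elim => [|m IH].
  rewrite mul0n addn0 mul0r addr0; apply: enc_ext => t Ht; rewrite /pump add0n.
  case: ltnP => // Hti; have -> : t = i by lia.
  by rewrite subnn mod0n addn0.
have -> : (i + m.+1 * L = (i + m * L) + L)%N by rewrite mulSn; lia.
rewrite enc_split IH -addrA; congr (_ + _).
have -> : enc (pump rho i L) (0 + (i + m * L)) L = enc rho i L.
  apply: enc_ext => t Ht; rewrite /pump add0n.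
  have -> : (i + m * L + t < i)%N = false by lia.
  have -> : (i + m * L + t - i = m * L + t)%N by lia.
  case: (ltngtP t L) => Ht'.
  - by rewrite addnC modnMDl modn_small // addnC.
  - lia.
  - by rewrite Ht' -mulSnr modnMl addn0.
rewrite intS mulrDl mul1r addrC //.
Qed.

Lemma no_negcycle f rho i L : EGwin f -> pplay f rho -> (0 < L)%N ->
  rho i = rho (i + L)%N -> 0 <= enc rho i L.
Proof.
move=> Hw Hp HL Heq; rewrite leNgt; apply/negP => Hs.
set m := (absz (enc rho 0 i + Kc)).+1.
have := Hw _ (pump_play Hp HL Heq) (i + m * L)%N; rewrite pump_enc // => [[H _]].
have : m%:Z * enc rho i L <= - m%:Z.
  rewrite -mulrN1 ler_pM2l ?ltz_nat //; lia.
have : (enc rho 0 i + Kc) <= (absz (enc rho 0 i + Kc))%:Z by apply: lez_abs.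
rewrite /m. lia.
Qed.

Lemma remloop_low rho a b t : (t <= a)%N -> remloop rho a b t = rho t.
Proof. by rewrite /remloop => ->. Qed.

Lemma remloop_high rho a b t : (a < b)%N -> rho a = rho b -> (a <= t)%N ->
  remloop rho a b t = rho (t + (b - a))%N.
Proof.
move=> Hab Heq Hat; rewrite /remloop; case: ifP => // Hta.
have -> : t = a by lia.
by rewrite subnKC ?(ltnW Hab).
Qed.

Lemma remloop_om_low rho a b k : (k < a)%N -> isom rho k -> isom (remloop rho a b) k.
Proof. by move=> Hk; rewrite /isom !remloop_low // ltnW. Qed.

Lemma remloop_om_high rho a b k : (a < b)%N -> rho a = rho b -> (b <= k)%N -> isom rho k ->
  isom (remloop rho a b) (k - (b - a))%N.
Proof.
move=> Hab Heq Hk; rewrite /isom !remloop_high //; try lia.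
have -> : (k - (b - a) + (b - a) = k)%N by lia.
by have -> : ((k - (b - a)).+1 + (b - a) = k.+1)%N by lia.
Qed.

Lemma Pcyc f : EGwin f -> forall L rho i, pplay f rho -> (0 < L)%N ->
  rho i = rho (i + L)%N -> exists z, segn rho i L = WInt z /\ 0 <= z.
Proof.
move=> Hw; elim/ltn_ind => L IH rho i Hp HL Heq.
case: (segn_spec rho i L) => [[Hseg [k [Hk Hom]]] | [Hseg _]]; last first.
  by exists (enc rho i L); split => //; apply: no_negcycle Hp HL Heq.
exfalso.
case: (classic (exists a b, (i <= a)%N /\ (a < b)%N /\ (b <= i + L)%N /\
         (a != i \/ b != i + L)%N /\ rho a = rho b)) =>
   [[a [b [Ha [Hab [Hb [Hne Heqab]]]]]] | Hno].
- case: (boolP ((a <= k) && (k < b))%N) => Hkab.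
  + have [z [Hz _]] := IH (b - a)%N ltac:(case: Hne => /eqP; lia) rho a Hp ltac:(lia)
       ltac:(by rewrite subnKC // ltnW).
    case: (segn_spec rho a (b - a)) => [[Hs _]|[_ Hno2]]; first by rewrite Hs in Hz.
    by apply: (Hno2 k) => //; lia.
  + have Hp' := remloop_play Hp Hab Heqab.
    have [z [Hz _]] := IH (L - (b - a))%N ltac:(case: Hne => /eqP; lia) (remloop rho a b) i Hp'
       ltac:(case: Hne => /eqP; lia) ltac:(rewrite remloop_low // remloop_high //; try lia;
          rewrite Heq; congr rho; lia).
    case: (segn_spec (remloop rho a b) i (L - (b - a))) => [[Hs _]|[_ Hno2]]; first by rewrite Hs in Hz.
    case: (ltnP k a) => Hka.
    * by apply: (Hno2 k) ; [lia | apply: remloop_om_low].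
    * have Hkb : (b <= k)%N by move: Hkab; rewrite Hka /= -leqNgt.
      by apply: (Hno2 (k - (b - a))%N); [lia | apply: remloop_om_high].
- have HLN : (L <= #|V|)%N.
    apply: (@distinct_le rho i L) => t1 t2 Ht Heq2; apply: Hno.
    exists (i + t1)%N, (i + t2)%N; do 4 (split; first by try (right; apply/eqP); lia).
    exact: Heq2.
  have := no_negcycle Hw Hp HL Heq.
  have := enc_om_le (pplay_edges Hp) Hk Hom.
  have : L%:Z * Wn%:Z <= Nn%:Z * Wn%:Z by rewrite ler_wpM2r // lez_nat.
  rewrite /Mc; lia.
Qed.

Lemma Qthr f : EGwin f ->
  (forall v z, nu v = TInt z -> - ((2 * Wn * Nn)%N)%:Z <= z) ->
  forall j rho, pplay f rho -> wge (segn rho 0 j) (nu (rho j)).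
Proof.
move=> Hw Hnu; elim/ltn_ind => j IH rho Hp.
have [Hlow Hthr] := Hw rho Hp j.
case Enu: (nu (rho j)) => [z| |]; rewrite Enu /= in Hthr; [ | by [] | by [] ].
case: (segn_spec rho 0 j) => [[Hseg [k [Hk Hom]]] | [-> _]] //.
rewrite Hseg /=.
case: (classic (exists a b, (a < b)%N /\ (b <= j)%N /\ rho a = rho b)) =>
   [[a [b [Hab [Hb Heqab]]]] | Hno].
- case: (boolP ((a <= k) && (k < b))%N) => Hkab.
  + have [z' [Hz _]] := Pcyc Hw Hp (ltac:(lia) : (0 < b - a)%N)
       (ltac:(by rewrite subnKC // ltnW) : rho a = rho (a + (b - a))%N).
    case: (segn_spec rho a (b - a)) => [[Hs _]|[_ Hno2]]; first by rewrite Hs in Hz.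
    by apply: (Hno2 k) => //; lia.
  + have Hp' := remloop_play Hp Hab Heqab.
    have Hj' : remloop rho a b (j - (b - a))%N = rho j.
      rewrite remloop_high //; try lia. congr rho; lia.
    have := IH (j - (b - a))%N ltac:(lia) (remloop rho a b) Hp'.
    rewrite Hj' Enu.
    case: (segn_spec (remloop rho a b) 0 (j - (b - a))) => [[-> _]|[-> Hno2]] //= _.
    case: (ltnP k a) => Hka.
    * by apply: (Hno2 k) ; [lia | apply: remloop_om_low].
    * have Hkb : (b <= k)%N by move: Hkab; rewrite Hka /= -leqNgt.
      by apply: (Hno2 (k - (b - a))%N); [lia | apply: remloop_om_high].
- have HLN : (j.+1 <= #|V|)%N.
    apply: (@distinct_le rho 0 j.+1) => t1 t2 Ht Heq2; apply: Hno.
    exists t1, t2; rewrite !add0n in Heq2; do 2 (split; first lia).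
    exact: Heq2.
  have := Hnu _ _ Enu.
  have := enc_om_le (pplay_edges Hp) Hk Hom.
  have : j%:Z * Wn%:Z <= Nn%:Z * Wn%:Z by rewrite ler_wpM2r // lez_nat; rewrite /Nn; lia.
  rewrite /Mc; lia.
Qed.

Lemma min_exists (P : int -> Prop) (B : int) : (exists c, P c) ->
  (forall c, P c -> B <= c) -> exists c, P c /\ forall c', P c' -> c <= c'.
Proof.
move=> [c0 Hc0] HB; apply: NNPP => Hnot.
have H : forall n : nat, forall c, P c -> B + n%:Z <= c.
  elim => [|n IH] c Hc; first by rewrite addr0; apply: HB.
  have := IH c Hc; rewrite le_eqVlt => /orP [/eqP Hceq|Hlt].
    exfalso; apply: Hnot; exists c; split => // c' Hc'.
    by rewrite -Hceq; apply: IH.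
  lia.
have := H (absz (c0 - B)).+1 c0 Hc0.
have : c0 - B <= (absz (c0 - B))%:Z by apply: lez_abs.
lia.
Qed.

Lemma enc_snoc rho j : enc rho 0 j.+1 = enc rho 0 j + iw (w (rho j) (rho j.+1)).
Proof. by rewrite -addn1 enc_split /= add0n addr0 addn1. Qed.

Lemma okc_mono v c c' : c <= c' -> okc v c -> okc v c'.
Proof.
move=> Hc [H1 H2]; split; first lia.
by case: (nu v) H2 => //= z; lia.
Qed.

Lemma positional_from_inv (Inv : V -> int -> Prop) :
  (forall v : V, exists u : V, E v u) ->
  Inv v0 0 -> (forall v c, Inv v c -> okc v c) ->
  (forall v c, Inv v c -> owner1 v -> exists u, E v u /\ Inv u (c + iw (w v u))) ->
  (forall v c, Inv v c -> ~~ owner1 v -> forall u, E v u -> Inv u (c + iw (w v u))) ->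
  exists f, (forall v, owner1 v -> E v (f v)) /\ EGwin f.
Proof.
move=> Hsucc I0 Iok I1 I2.
pose Win v c := exists c', c' <= c /\ Inv v c'.
have Hex : forall v, exists u, E v u /\ (owner1 v -> forall c, Win v c -> Win u (c + iw (w v u))).
  move=> v; case: (boolP (owner1 v)) => Ho.
    case: (classic (exists c, Inv v c)) => [Hin|Hnin].
      have [cs [Hcs Hmin]] := min_exists Hin (fun c Hc => proj1 (Iok v c Hc)).
      have [u [Euv Hu]] := I1 v cs Hcs Ho.
      exists u; split => // _ c [c' [Hc' Hinv]]; exists (cs + iw (w v u)); split => //.
      have := Hmin c' Hinv; lia.
    have [u Hu] := Hsucc v; exists u; split => // _ c [c' [_ Hinv]].
    by exfalso; apply: Hnin; exists c'.
  have [u Hu] := Hsucc v; exists u; split => // Ho'; by rewrite Ho' in Ho.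
pose f v := proj1_sig (constructive_indefinite_description _ (Hex v)).
have Hf : forall v, E v (f v) /\ (owner1 v -> forall c, Win v c -> Win (f v) (c + iw (w v (f v)))).
  move=> v; exact: (proj2_sig (constructive_indefinite_description _ (Hex v))).
exists f; split; first by move=> v _; case: (Hf v).
move=> rho Hp.
have HW : forall j, Win (rho j) (enc rho 0 j).
  elim => [|j IH].
    by exists 0; split => //; case: Hp => [[-> _] _].
  rewrite enc_snoc; case: (boolP (owner1 (rho j))) => Ho.
    case: Hp => [_ Hc]; rewrite (Hc j Ho); exact: (proj2 (Hf (rho j)) Ho _ IH).
  case: IH => c' [Hc' Hinv].
  exists (c' + iw (w (rho j) (rho j.+1))); split; first lia.
  by apply: I2 => //; case: Hp => [[_ He] _]; apply: He.
move=> j; case: (HW j) => c' [Hc' Hinv].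
exact: okc_mono Hc' (Iok _ _ Hinv).
Qed.

Fixpoint Dset (rho : nat -> V) i n : {set V} :=
  match n with 0 => set0 | n'.+1 => rho i |: Dset rho i.+1 n' end.

Lemma Dset_mem rho i n x : x \in Dset rho i n -> exists t, (t < n)%N /\ rho (i + t)%N = x.
Proof.
elim: n i => [|n IH] i /=; first by rewrite in_set0.
rewrite in_setU1 => /orP [/eqP ->|/IH [t [Ht <-]]].
  by exists 0%N; rewrite addn0.
by exists t.+1; rewrite addSnnS.
Qed.

Lemma Dset_in rho i n t : (t < n)%N -> rho (i + t)%N \in Dset rho i n.
Proof.
elim: n i t => [|n IH] i t //= Ht; rewrite in_setU1.
case: t Ht => [|t] Ht; first by rewrite addn0 eqxx.
by rewrite -addSnnS IH ?orbT.
Qed.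

Lemma greedy rho : edges rho ->
  (forall i k, (0 < k)%N -> rho i = rho (i + k)%N -> 0 <= enc rho i k) ->
  forall n i, - (#|Dset rho i n|%:Z * Mc) <= enc rho i n.
Proof.
move=> He Hret; elim/ltn_ind => n IH i.
case: n IH => [|n] IH; first by rewrite /= cards0 mul0r oppr0.
case: (classic (exists k, (0 < k <= n.+1)%N /\ rho (i + k)%N = rho i)) => [[k [Hk Hki]]|Hno].
  have -> : n.+1 = (k + (n.+1 - k))%N by lia.
  rewrite enc_split.
  have H1 := Hret i k ltac:(lia) (esym Hki).
  have H2 := IH (n.+1 - k)%N ltac:(lia) (i + k)%N.
  have Hsub : (#|Dset rho (i + k) (n.+1 - k)| <= #|Dset rho i (k + (n.+1 - k))|)%N.
    apply: subset_leq_card; apply/subsetP => x /Dset_mem [t [Ht <-]].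
    rewrite -addnA; apply: Dset_in; lia.
  have : (#|Dset rho (i + k) (n.+1 - k)|%:Z * Mc <= #|Dset rho i (k + (n.+1 - k))|%:Z * Mc).
    by rewrite ler_wpM2r ?lez_nat // /Mc.
  lia.
rewrite /= cardsU1.
have Hnot : rho i \notin Dset rho i.+1 n.
  apply/negP => /Dset_mem [t [Ht Heq]]; apply: Hno; exists t.+1; split; first lia.
  by rewrite addnS.
rewrite Hnot /=.
have := IH n (ltnSn n) i.+1; have := iw_ge (He i).
rewrite /Mc; lia.
Qed.

Definition succv (v : V) : V := if [pick u | E v u] is Some u then u else v.

Lemma succv_E v : (exists u, E v u) -> E v (succv v).
Proof.
move=> [u Hu]; rewrite /succv; case: pickP => [u' //|H].
by have := H u; rewrite Hu.
Qed.

Section Ext.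
Variables (s : strategy1 V) (p : nat -> V) (n : nat).

Definition nxt (h : seq V) (k : nat) : V :=
  let v := nth (p 0%N) h k in if owner1 v then s (take k h) v else succv v.

Fixpoint hist (k : nat) : seq V :=
  match k with
  | 0 => [:: p 0%N]
  | k'.+1 => let h := hist k' in rcons h (if (k'.+1 <= n)%N then p k'.+1 else nxt h k')
  end.

Definition ext (t : nat) : V := nth (p 0%N) (hist t) t.

Lemma hist_spec k : hist k = [seq ext t | t <- iota 0 k.+1] /\
  ext k.+1 = (if (k.+1 <= n)%N then p k.+1 else nxt (hist k) k).
Proof.
elim: k => [|k [IH1 IH2]].
  split; first by rewrite /= /ext.
  by rewrite /ext /=.
have Hs : size (hist k) = k.+1 by rewrite IH1 size_map size_iota.
have IH1' : hist k.+1 = [seq ext t | t <- iota 0 k.+2].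
  have E2 : iota 0 k.+2 = iota 0 k.+1 ++ [:: k.+1] by rewrite -addn1 iotaD.
  rewrite E2 map_cat -IH1 /= cats1 IH2 //=.
split => //.
have Hs1 : size (hist k.+1) = k.+2 by rewrite IH1' size_map size_iota.
rewrite /ext (_ : hist k.+2 = rcons (hist k.+1) (if (k.+2 <= n)%N then p k.+2 else nxt (hist k.+1) k.+1)) // nth_rcons Hs1 ltnn eqxx.
by []. Qed.

Lemma ext_prefix k : (k <= n)%N -> ext k = p k.
Proof.
case: k => [|k] Hk; first by rewrite /ext.
by rewrite (proj2 (hist_spec k)) Hk.
Qed.

Lemma ext_next k : (n < k.+1)%N ->
  ext k.+1 = (if owner1 (ext k) then s [seq ext t | t <- iota 0 k] (ext k) else succv (ext k)).
Proof.
move=> Hk; rewrite (proj2 (hist_spec k)) leqNgt Hk /= /nxt (proj1 (hist_spec k)).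
rewrite (nth_map 0%N) ?size_iota // nth_iota // add0n.
by rewrite -map_take take_iota (minn_idPl (leqnSn k)).
Qed.
End Ext.

Lemma extension (s : strategy1 V) p n :
  (forall v : V, exists u : V, E v u) -> is_strategy1 E owner1 s ->
  p 0%N = v0 -> (forall k, (k < n)%N -> E (p k) (p k.+1)) ->
  (forall k, (k < n)%N -> owner1 (p k) -> p k.+1 = s [seq p t | t <- iota 0 k] (p k)) ->
  exists rho, is_play E v0 rho /\ consistent owner1 s rho /\ forall k, (k <= n)%N -> rho k = p k.
Proof.
move=> Hsucc Hs H0 HE Hc; exists (ext s p n); split; [split|split].
- by rewrite ext_prefix.
- move=> k; case: (ltnP k n) => Hk.
    by rewrite !ext_prefix ?(ltnW Hk) //; apply: HE.
  rewrite ext_next ?ltnS //.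
  case: ifP => Ho; [exact: Hs | exact: succv_E].
- move=> k Ho; case: (ltnP k n) => Hk.
    rewrite !ext_prefix ?(ltnW Hk) // in Ho *; rewrite Hc //.
    congr (s _ _); apply/eq_in_map => t; rewrite mem_iota add0n => /andP [_ Ht].
    by rewrite ext_prefix //; lia.
  by rewrite ext_next ?Ho //; lia.
- exact: ext_prefix.
Qed.

Lemma main_forward :
  (forall v : V, exists u : V, E v u) ->
  (forall v z, nu v = TInt z -> - ((2 * Wn * Nn)%N)%:Z <= z) ->
  has_winning_strategy E owner1 v0 w nu -> memoryless_winning E owner1 v0 w nu.
Proof.
move=> Hsucc Hnu [s [Hs Hwin]].
pose Inv v c := exists rho j, is_play E v0 rho /\ consistent owner1 s rho /\
  rho j = v /\ enc rho 0 j = c.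
have I0 : Inv v0 0.
  have [rho [Hp [Hc _]]] := @extension s (fun _ => v0) 0 Hsucc Hs erefl (fun k Hk => ltac:(done))
    (fun k Hk => ltac:(done)).
  by exists rho, 0%N; do 2 (split => //); split => //; case: Hp.
have Iok : forall v c, Inv v c -> okc v c.
  move=> v c [rho [j [Hp [Hc [<- <-]]]]]; have [Ha Hb] := Hwin rho Hp Hc.
  have He : edges rho by case: Hp.
  split.
    have Hret : forall i k, (0 < k)%N -> rho i = rho (i + k)%N -> 0 <= enc rho i k.
      move=> i k Hk Heq; have [z [Hz Hz0]] := Ha i (i + k)%N ltac:(lia) Heq.
      rewrite seg_weightE addKn in Hz.
      by case: (segn_spec rho i k) => [[Hs' _]|[Hs' _]]; rewrite Hs' in Hz => //; case: Hz => ->.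
    have := greedy He Hret j 0.
    have : (#|Dset rho 0 j|%:Z * Mc <= Kc).
      by rewrite /Kc mulrC [X in _ <= X]mulrC ler_wpM2l ?lez_nat ?max_card // /Mc.
    lia.
  have := Hb j; rewrite seg_weightE subn0.
  case: (segn_spec rho 0 j) => [[-> _]|[-> _]]; by case: (nu (rho j)).
have I1 : forall v c, Inv v c -> owner1 v -> exists u, E v u /\ Inv u (c + iw (w v u)).
  move=> v c [rho [j [Hp [Hc [<- <-]]]]] Ho; exists (rho j.+1); split; first by case: Hp.
  by exists rho, j.+1; do 3 (split => //); rewrite enc_snoc.
have I2 : forall v c, Inv v c -> ~~ owner1 v -> forall u, E v u -> Inv u (c + iw (w v u)).
  move=> v c [rho [j [Hp [Hc [Hv <-]]]]] Ho u Hu.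
  pose p k := if (k <= j)%N then rho k else u.
  have [rho' [Hp' [Hc' Hpre]]] : exists rho', is_play E v0 rho' /\ consistent owner1 s rho' /\
      forall k, (k <= j.+1)%N -> rho' k = p k.
    apply: extension => //.
    - by rewrite /p leq0n; case: Hp.
    - move=> k Hk; rewrite /p; case: (ltnP k j) => Hkj.
        by rewrite (ltnW Hkj); case: Hp => _; apply.
      have -> : k = j by lia.
      by rewrite leqnn Hv.
    - move=> k Hk; rewrite /p; case: (ltnP k j) => Hkj.
        rewrite (ltnW Hkj) => Hok; rewrite (Hc k Hok); congr (s _ _).
        apply/eq_in_map => t; rewrite mem_iota add0n => /andP [_ Ht].
        by rewrite ifT //; lia.
      have ekj : k = j by lia.
      by rewrite ekj leqnn Hv (negbTE Ho).
  exists rho', j.+1; do 2 (split => //); split.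
    by rewrite Hpre // /p ltnn.
  rewrite enc_snoc Hpre // Hpre // /p leqnn ltnn Hv.
  congr (_ + _); apply: enc_ext => t Ht; rewrite !add0n Hpre /p ?Ht //; lia.
have [f [Hf HEG]] := positional_from_inv Hsucc I0 Iok I1 I2.
exists f; split => // rho Hp Hc.
have Hpp : pplay f rho by split.
split.
  move=> i j Hij Heq; rewrite seg_weightE.
  apply: (Pcyc HEG Hpp); first lia.
  by rewrite subnKC // ltnW.
move=> j; rewrite seg_weightE subn0; exact: (Qthr HEG Hnu j Hpp).
Qed.
End Proof.

Unset Implicit Arguments.
Local Close Scope ring_scope.

Theorem lemma10 (V : finType) (E : rel V) (owner1 : pred V) (v0 : V)
    (w : V -> V -> weight) (nu : V -> thr)
    (Hsucc : forall v : V, exists u : V, E v u)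
    (Hnu : forall (v : V) (z : int), nu v = TInt z ->
             (- ((2 * maxW E w * #|V|)%N)%:Z <= z)%R) :
  has_winning_strategy E owner1 v0 w nu <->
  memoryless_winning E owner1 v0 w nu.
Proof.
split; first exact: main_forward.
move=> [f [Hf Hwin]]; exists (fun _ v => f v); split => //.
by move=> h v Ho; apply: Hf.
Qed.
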